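(* Let $n\geq 2$ and let $M=(M_{ij})_{1\le i,j\le n}$ be an $n\times n$ matrix of integers with $M_{ij}>0$ for all $i,j$, $M_{11}=1$, and $M_{ii}>1$ for all $i\in\{2,\dots,n\}$. Then $\mathrm{Cat}(M)\neq\emptyset$ if and only if $M_{ii}>M_{1i}M_{i1}$ for all $i\in\{2,\dots,n\}$ and $M_{ij}\geq M_{i1}M_{1j}$ for all $i,j\in\{2,\dots,n\}$.
   Context: For an $n\times n$ matrix $M=(m_{ij})$ with entries in the natural numbers, $\mathrm{Cat}(M)$ denotes the collection of categories $A$ with exactly $n$ distinct objects $x_1,\dots,x_n$ such that $|A(x_i,x_j)|=m_{ij}$ for all $i,j$, where $A(x_i,x_j)$ is the set of morphisms from $x_i$ to $x_j$. *)

(* Defs.v *)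
From mathcomp Require Import all_boot.
Set Implicit Arguments. Unset Strict Implicit. Unset Printing Implicit Defensive.

(* A (small) category whose objects are exactly the n distinct objects
   x_0, ..., x_{n-1} (indexed by 'I_n), with finite hom-sets. *)
Record cat_on (n : nat) := CatOn {
  Hom : 'I_n -> 'I_n -> finType;
  idm : forall i : 'I_n, Hom i i;
  comp : forall i j k : 'I_n, Hom j k -> Hom i j -> Hom i k;
  comp_assoc : forall (i j k l : 'I_n) (f : Hom i j) (g : Hom j k) (h : Hom k l),
      comp h (comp g f) = comp (comp h g) f;
  comp_idl : forall (i j : 'I_n) (f : Hom i j), comp (idm j) f = f;
  comp_idr : forall (i j : 'I_n) (f : Hom i j), comp f (idm i) = f
}.

Definition in_Cat (n : nat) (M : 'I_n -> 'I_n -> nat) (A : cat_on n) : Prop :=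
  forall i j : 'I_n, #|Hom A i j| = M i j.

Definition Cat_nonempty (n : nat) (M : 'I_n -> 'I_n -> nat) : Prop :=
  exists A : cat_on n, in_Cat M A.

(* Main.v *)
Require Import Defs.
From mathcomp Require Import all_boot.
From mathcomp Require Import zify.

Set Implicit Arguments. Unset Strict Implicit. Unset Printing Implicit Defensive.

Section Constr.
Variables (n : nat) (M : 'I_n -> 'I_n -> nat) (o : 'I_n).
Hypothesis Hpos : forall i j, 0 < M i j.
Hypothesis Hoo : M o o = 1.
Hypothesis Hs : forall i, i != o -> M o i * M i o < M i i.
Hypothesis Hw : forall i j, i != o -> j != o -> M i o * M o j <= M i j.

Definition aa j := M o j.
Definition bb i := M i o.
Definition isid i j (u : nat) := (i == j) && (u == (M i i).-1).
Definition df i j u := if u < bb i * aa j then u %/ aa j else 0.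
Definition dg i j u := if u < bb i * aa j then u %% aa j else 0.
Definition cv i j k (w u : nat) : nat :=
  if isid i j u then w else if isid j k w then u else df i j u * aa k + dg j k w.

Lemma ba_le i k : bb i * aa k <= M i k.
Proof.
rewrite /bb /aa.
case: (eqVneq i o) => [->|hi]; first by rewrite Hoo mul1n.
case: (eqVneq k o) => [->|hk]; first by rewrite Hoo muln1.
exact: Hw.
Qed.

Lemma df_lt i j u : df i j u < bb i.
Proof.
rewrite /df; case: ifP => h; last exact: Hpos.
by rewrite ltn_divLR // /aa Hpos.
Qed.

Lemma dg_lt i j u : dg i j u < aa j.
Proof.
rewrite /dg; case: ifP => h; last exact: Hpos.
by rewrite ltn_mod /aa Hpos.
Qed.

Lemma enc_lt i k f g : f < bb i -> g < aa k -> f * aa k + g < bb i * aa k.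
Proof. move=> hf hg; nia. Qed.

Lemma df_enc i k f g : f < bb i -> g < aa k -> df i k (f * aa k + g) = f.
Proof.
move=> hf hg; rewrite /df enc_lt // divnMDl; last by rewrite /aa Hpos.
by rewrite divn_small // addn0.
Qed.

Lemma dg_enc i k f g : f < bb i -> g < aa k -> dg i k (f * aa k + g) = g.
Proof.
move=> hf hg; rewrite /dg enc_lt // modnMDl modn_small //.
Qed.

Lemma isid_enc i k f g : f < bb i -> g < aa k ->
  isid i k (f * aa k + g) = (i == o) && (k == o).
Proof.
move=> hf hg; rewrite /isid.
have hlt := enc_lt hf hg.
case: (eqVneq i k) => [e|ne] /=; last first.
  by case: (eqVneq i o) => // e; subst; case: (eqVneq k o) => // e; subst; move/eqP: ne.
subst k; rewrite andbb.
case: (eqVneq i o) => [e|hi] /=.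
  subst; move: hlt; rewrite /bb /aa Hoo /= => hlt; apply/eqP; lia.
apply/negbTE/eqP; move: (Hs hi) hlt; rewrite /bb /aa; lia.
Qed.

Lemma cv_lt i j k w u : u < M i j -> w < M j k -> cv i j k w u < M i k.
Proof.
move=> hu hw; rewrite /cv.
case: (isid i j u) /andP => [[/eqP e _]|_]; first by subst.
case: (isid j k w) /andP => [[/eqP e _]|_]; first by subst.
apply: leq_trans (ba_le i k); apply: enc_lt; [exact: df_lt | exact: dg_lt].
Qed.

Lemma df_o i j u : i = o -> df i j u = 0.
Proof. move=> ->; have := df_lt o j u; rewrite /bb Hoo; lia. Qed.
Lemma dg_o i j u : j = o -> dg i j u = 0.
Proof. move=> ->; have := dg_lt i o u; rewrite /aa Hoo; lia. Qed.

Lemma cv_assoc i j k l u w t : u < M i j -> w < M j k -> t < M k l ->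
  cv i k l t (cv i j k w u) = cv i j l (cv j k l t w) u.
Proof.
move=> hu hw ht.
rewrite {2}/cv; case: (boolP (isid i j u)) => Iu.
  by move: (Iu) => /andP[/eqP e _]; subst; rewrite /cv Iu.
rewrite /= {3}/cv; case: (boolP (isid j k w)) => Iw.
  by move: (Iw) => /andP[/eqP e _]; subst.
case: (boolP (isid k l t)) => It.
  move: (It) => /andP[/eqP e /eqP et]; subst.
  rewrite /cv It ?(negbTE Iu) ?(negbTE Iw).
  by case: ifP => // /andP[/eqP -> /eqP ->].
rewrite /cv ?(negbTE Iu) ?(negbTE Iw) ?(negbTE It).
rewrite !isid_enc ?df_lt ?dg_lt // !df_enc ?dg_enc ?df_lt ?dg_lt //.
case: (boolP ((i == o) && (k == o))) => [/andP[/eqP e1 /eqP e2]|h1];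
  case: (boolP ((j == o) && (l == o))) => [/andP[/eqP e3 /eqP e4]|h2] //.
- exfalso; subst; move: Iu; rewrite /isid eqxx Hoo /=; move: hu; rewrite Hoo; lia.
- subst; rewrite df_o // mul0n add0n /dg; move: ht; rewrite /bb /aa Hoo mul1n => ht.
  by rewrite ht modn_small.
- subst; rewrite dg_o // /aa Hoo muln1 addn0 /df; move: hu; rewrite /bb /aa Hoo muln1 => hu.
  by rewrite hu divn1.
Qed.

Definition homT (i j : 'I_n) : finType := 'I_(M i j).
Definition cidm (i : 'I_n) : homT i i := Ordinal (ltn_pmod (M i i).-1 (Hpos i i)).
Definition ccomp (i j k : 'I_n) (y : homT j k) (x : homT i j) : homT i k :=
  Ordinal (ltn_pmod (cv i j k y x) (Hpos i k)).

Lemma val_ccomp i j k (y : homT j k) (x : homT i j) :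
  val (ccomp y x) = cv i j k y x.
Proof. by rewrite /= modn_small // cv_lt. Qed.

Lemma val_cidm i : val (cidm i) = (M i i).-1.
Proof. by rewrite /= modn_small // prednK ?Hpos. Qed.

Lemma ccomp_assoc (i j k l : 'I_n) (f : homT i j) (g : homT j k) (h : homT k l) :
  ccomp h (ccomp g f) = ccomp (ccomp h g) f.
Proof. apply: val_inj; rewrite !val_ccomp; exact: cv_assoc. Qed.

Lemma ccomp_idl (i j : 'I_n) (f : homT i j) : ccomp (cidm j) f = f.
Proof.
apply: val_inj; rewrite val_ccomp val_cidm /cv.
case: ifP => [/andP[/eqP e /eqP ef]|_]; first by subst; symmetry; exact: ef.
by rewrite /isid !eqxx.
Qed.

Lemma ccomp_idr (i j : 'I_n) (f : homT i j) : ccomp f (cidm i) = f.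
Proof. by apply: val_inj; rewrite val_ccomp val_cidm /cv /isid !eqxx. Qed.

Definition theCat : cat_on n := CatOn ccomp_assoc ccomp_idl ccomp_idr.

Lemma theCat_in : in_Cat M theCat.
Proof. by move=> i j; rewrite /= card_ord. Qed.

End Constr.

Section Nec.
Variables (n : nat) (A : cat_on n) (o : 'I_n).
Hypothesis Ho : #|Hom A o o| = 1.

Lemma endo_triv (x : Hom A o o) : x = idm A o.
Proof. by move/eqP: Ho; rewrite eqn_leq => /andP[/fintype_le1P h _]; rewrite (h x). Qed.

Lemma nec_le i j : 0 < #|Hom A o i| -> 0 < #|Hom A j o| ->
  #|Hom A i o| * #|Hom A o j| <= #|Hom A i j|.
Proof.
move=> /card_gt0P[h _] /card_gt0P[k _].
rewrite -card_prod.
pose F := fun p : Hom A i o * Hom A o j => Defs.comp (p.2) (p.1).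
have Finj : injective F.
  move=> [f g] [f' g'] /= e.
  have eg : g = g'.
    move: e; rewrite /F /= => e.
    by rewrite -(comp_idr g) -(comp_idr g') -{1}(endo_triv (Defs.comp f h))
      -(endo_triv (Defs.comp f' h)) !comp_assoc e.
  subst g'.
  have ef : f = f'.
    move: e; rewrite /F /= => e.
    by rewrite -(comp_idl f) -(comp_idl f') -(endo_triv (Defs.comp k g))
      -!comp_assoc e.
  by subst.
by rewrite -(card_image Finj); apply: max_card.
Qed.

Lemma nec_lt i : 0 < #|Hom A o i| -> 0 < #|Hom A i o| -> 1 < #|Hom A i i| ->
  #|Hom A o i| * #|Hom A i o| < #|Hom A i i|.
Proof.
move=> /card_gt0P[h _] /card_gt0P[k _] hi.
pose F := fun p : Hom A i o * Hom A o i => Defs.comp (p.2) (p.1).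
have Finj : injective F.
  move=> [f g] [f' g'] /= e.
  have eg : g = g'.
    move: e; rewrite /F /= => e.
    by rewrite -(comp_idr g) -(comp_idr g') -{1}(endo_triv (Defs.comp f h))
      -(endo_triv (Defs.comp f' h)) !comp_assoc e.
  subst g'.
  have ef : f = f'.
    move: e; rewrite /F /= => e.
    by rewrite -(comp_idl f) -(comp_idl f') -(endo_triv (Defs.comp k g))
      -!comp_assoc e.
  by subst.
have sub : codom F \subset predC1 (idm A i).
  apply/subsetP => x /codomP[[f g] ->]; rewrite !inE /F /=; apply/eqP => e.
  move: hi; rewrite ltnNge => /negP; apply; apply/fintype_le1P => y z.
  have ey : forall y, y = idm A i.
    move=> y0.
    have -> : y0 = Defs.comp g (Defs.comp (Defs.comp f (Defs.comp y0 g)) f).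
      by rewrite !comp_assoc e comp_idl -comp_assoc e comp_idr.
    by rewrite (endo_triv (Defs.comp f (Defs.comp y0 g))) comp_idl e.
  by rewrite (ey y) (ey z).
have := subset_leq_card sub; rewrite cardC1 (card_codom Finj) card_prod mulnC.
have : 0 < #|Hom A i i| by lia.
lia.
Qed.
End Nec.

Theorem mainTheorem6 (n : nat) (Hn : 1 < n) (M : 'I_n -> 'I_n -> nat) :
  (forall i j : 'I_n, 0 < M i j) ->
  M (Ordinal (ltnW Hn)) (Ordinal (ltnW Hn)) = 1 ->
  (forall i : 'I_n, 0 < i -> 1 < M i i) ->
  (Cat_nonempty M <->
   ((forall i : 'I_n, 0 < i ->
       M (Ordinal (ltnW Hn)) i * M i (Ordinal (ltnW Hn)) < M i i) /\
    (forall i j : 'I_n, 0 < i -> 0 < j ->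
       M i (Ordinal (ltnW Hn)) * M (Ordinal (ltnW Hn)) j <= M i j))).
Proof.
set o := Ordinal (ltnW Hn) => Hpos Hoo Hd.
have neo : forall i : 'I_n, (i != o) = (0 < i).
  by move=> i; rewrite lt0n; congr negb; apply/eqP/eqP => [->|h] //; apply: val_inj.
split.
  move=> [A HA]; have Ho : #|Hom A o o| = 1 by rewrite HA.
  split.
    move=> i hi; rewrite -!HA; apply: nec_lt => //; rewrite HA //.
    exact: Hd.
  by move=> i j _ _; rewrite -!HA; apply: nec_le; rewrite // HA.
move=> [Hs Hw].
have Hs' : forall i, i != o -> M o i * M i o < M i i by move=> i; rewrite neo; exact: Hs.
have Hw' : forall i j, i != o -> j != o -> M i o * M o j <= M i j.
  by move=> i j; rewrite !neo; exact: Hw.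
exists (theCat Hpos Hoo Hs' Hw'); exact: theCat_in.
Qed.
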